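(* Let $\mu>0$, $x>0$, $y>0$, and let $n,q\ge 0$ be integers. Then $$\sum_{k=0}^{n}F_{\mu+k}(x,y)<P_{\mu}(x,y),$$ and, provided $F_{\mu+n+1}(x,y)>F_{\mu+n+q+2}(x,y)$, $$P_\mu(x,y)<\sum_{k=0}^{n}F_{\mu+k}(x,y)+U^{(q)}_{\mu+n+1}(x,y),$$ where $U_{\nu}^{(q)}(x,y)=\dfrac{\sum_{k=0}^q F_{\nu+k}(x,y)}{F_\nu(x,y)-F_{\nu+q+1}(x,y)}F_{\nu}(x,y)$.
   Context: $P_{\mu}(x,y)=x^{\frac12(1-\mu)}\int_0^{y} t^{\frac12(\mu-1)}e^{-t-x}I_{\mu-1}(2\sqrt{xt})\,dt$ for $\mu>0$, with $I_\nu$ the modified Bessel function of the first kind; $F_{\mu}(x,y)=(y/x)^{\mu/2}e^{-x-y}I_{\mu}(2\sqrt{xy})$. *)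

(* Defs.v *)
From Stdlib Require Import Reals.
From Coquelicot Require Import Coquelicot.
Open Scope R_scope.

Definition Gamma (s : R) : R :=
  RInt_gen (fun t => Rpower t (s - 1) * exp (- t)) (at_right 0) (Rbar_locally p_infty).

Definition BesselI (nu z : R) : R :=
  Series (fun k : nat => Rpower (z / 2) (2 * INR k + nu) / (INR (Factorial.fact k) * Gamma (INR k + nu + 1))).

Definition Fmu (mu x y : R) : R :=
  Rpower (y / x) (mu / 2) * exp (- x - y) * BesselI mu (2 * sqrt (x * y)).

(* P_mu(x,y) = x^((1-mu)/2) int_0^y t^((mu-1)/2) e^(-t-x) I_(mu-1)(2 sqrt(x t)) dt
   (improper at 0 since the integrand may be singular there when mu < 1). *)
Definition Pmu (mu x y : R) : R :=
  Rpower x ((1 - mu) / 2) *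
  RInt_gen (fun t => Rpower t ((mu - 1) / 2) * exp (- t - x) * BesselI (mu - 1) (2 * sqrt (x * t)))
           (at_right 0) (at_point y).

Definition Uq (q : nat) (nu x y : R) : R :=
  sum_f_R0 (fun k => Fmu (nu + INR k) x y) q / (Fmu nu x y - Fmu (nu + INR q + 1) x y) * Fmu nu x y.

(* Main.v *)
Require Import Defs.
From Stdlib Require Import Reals Lra Lia Classical.
From Coquelicot Require Import Coquelicot.
Open Scope R_scope.

Lemma ball_R (c e y : R) : ball c e y <-> Rabs (y - c) < e.
Proof. reflexivity. Qed.

Lemma incr_lim_p (g : R -> R) (M : R) :
  (forall a b, 0 < a -> a <= b -> g a <= g b) ->
  (forall t, 0 < t -> g t <= M) ->
  exists L, filterlim g (Rbar_locally p_infty) (locally L) /\ (forall t, 0 < t -> g t <= L).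
Proof.
  intros Hi Hb.
  set (E := fun y => exists t, 0 < t /\ y = g t).
  assert (HE : bound E) by (exists M; intros y [t [Ht ->]]; auto).
  assert (HE2 : exists y, E y) by (exists (g 1); exists 1; split; [lra|auto]).
  destruct (completeness E HE HE2) as [L [HL1 HL2]].
  exists L. split.
  - apply filterlim_locally. intros eps.
    assert (H : exists t0, 0 < t0 /\ L - eps < g t0).
    { apply NNPP. intro Hn. assert (Hu : is_upper_bound E (L - eps)).
      { intros y [t [Ht ->]]. apply Rnot_lt_le. intro Hl. apply Hn. exists t; auto. }
      specialize (HL2 _ Hu). destruct eps; simpl in *; lra. }
    destruct H as [t0 [Ht0 Hg]]. exists t0. intros t Ht.
    apply ball_R. assert (g t0 <= g t) by (apply Hi; lra).
    assert (g t <= L) by (apply HL1; exists t; split; [lra|auto]).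
    apply Rabs_lt_between; lra.
  - intros t Ht. apply HL1. exists t; auto.
Qed.

Lemma incr_lim_0 (g : R -> R) (m : R) :
  (forall a b, 0 < a -> a <= b -> g a <= g b) ->
  (forall t, 0 < t -> m <= g t) ->
  exists L, filterlim g (at_right 0) (locally L) /\ (forall t, 0 < t -> L <= g t).
Proof.
  intros Hi Hb.
  set (E := fun y => exists t, 0 < t /\ y = - g t).
  assert (HE : bound E) by (exists (-m); intros y [t [Ht ->]]; specialize (Hb t Ht); lra).
  assert (HE2 : exists y, E y) by (exists (- g 1); exists 1; split; [lra|auto]).
  destruct (completeness E HE HE2) as [L [HL1 HL2]].
  exists (-L). split.
  - apply filterlim_locally. intros eps.
    assert (H : exists t0, 0 < t0 /\ L - eps < - g t0).
    { apply NNPP. intro Hn. assert (Hu : is_upper_bound E (L - eps)).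
      { intros y [t [Ht ->]]. apply Rnot_lt_le. intro Hl. apply Hn. exists t; auto. }
      specialize (HL2 _ Hu). destruct eps; simpl in *; lra. }
    destruct H as [t0 [Ht0 Hg]]. exists (mkposreal t0 Ht0). intros t Ht Hpos.
    assert (Ht' : Rabs (t - 0) < t0) by exact Ht. apply Rabs_lt_between in Ht'.
    apply ball_R. assert (g t <= g t0) by (apply Hi; lra).
    assert (- g t <= L) by (apply HL1; exists t; split; [lra|auto]).
    apply Rabs_lt_between; lra.
  - intros t Ht. assert (- g t <= L) by (apply HL1; exists t; split; [lra|auto]). lra.
Qed.

Lemma is_derive_Rpower (a t : R) : 0 < t -> is_derive (fun u => Rpower u a) t (a * Rpower t (a - 1)).
Proof. intros Ht. apply is_derive_Reals. apply derivable_pt_lim_power; auto. Qed.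

Lemma lim_Rpower_0 (s : R) : 0 < s -> filterlim (fun t => Rpower t s) (at_right 0) (locally 0).
Proof.
  intros Hs. unfold Rpower.
  apply (filterlim_comp _ _ _ (fun t => s * ln t) exp _ (Rbar_locally m_infty)).
  - apply (filterlim_comp _ _ _ ln (fun y => s * y) _ (Rbar_locally m_infty)).
    + apply is_lim_ln_0.
    + pose proof (is_lim_scal_l (fun y => y) s m_infty m_infty (is_lim_id m_infty)) as H.
      simpl in H. unfold is_lim in H. revert H. case Rle_dec; intro H1; [|lra].
      case Rle_lt_or_eq_dec; intros H2 H; [exact H| lra].
  - exact is_lim_exp_m.
Qed.

Lemma lim_pow_exp_inf (s : R) :
  filterlim (fun t => Rpower t s * exp (- t)) (Rbar_locally p_infty) (locally 0).
Proof.
  apply (filterlim_ext_loc (fun t => exp (t * (s * (ln t / t) - 1)))).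
  - exists 0. intros t Ht. unfold Rpower. rewrite <- exp_plus. f_equal. field. lra.
  - apply (filterlim_comp _ _ _ (fun t => t * (s * (ln t / t) - 1)) exp _ (Rbar_locally m_infty)).
    + assert (H : is_lim (fun t => t * (s * (ln t / t) - 1)) p_infty (Rbar_mult p_infty (-1))).
      { apply is_lim_mult. apply is_lim_id.
        replace (Finite (-1)) with (Finite (s*0 - 1)) by (f_equal; ring).
        apply is_lim_minus'. pose proof (is_lim_scal_l _ s p_infty 0 is_lim_div_ln_p) as Hq. simpl in Hq. exact Hq. apply is_lim_const.
        simpl; lra. }
      simpl in H. revert H. destruct (Rle_dec 0 (-1)) as [H1|H1]; [exfalso; lra|]. intro H. exact H.
    + exact is_lim_exp_m.
Qed.

Lemma isd_mult (f g : R -> R) x df dg : is_derive f x df -> is_derive g x dg ->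
  is_derive (fun t => f t * g t) x (df * g x + f x * dg).
Proof. intros H1 H2. apply is_derive_Reals. apply is_derive_Reals in H1. apply is_derive_Reals in H2.
  replace (df * g x + f x * dg) with (df * g x + f x * dg) by ring.
  exact (derivable_pt_lim_mult f g x df dg H1 H2). Qed.

Lemma isd_expm (x : R) : is_derive (fun t => exp (- t)) x (- exp (- x)).
Proof. auto_derive; auto; ring. Qed.

Lemma Rpower_pos (t a : R) : 0 < Rpower t a.
Proof. unfold Rpower. apply exp_pos. Qed.

Lemma cont_Rpower (a t : R) : 0 < t -> continuous (fun u => Rpower u a) t.
Proof. intros Ht. apply (ex_derive_continuous (fun u => Rpower u a)). eexists. apply is_derive_Rpower; auto. Qed.

Lemma cont_expm (t : R) : continuous (fun u => exp (- u)) t.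
Proof. apply (ex_derive_continuous (fun u => exp (- u))). eexists. apply isd_expm. Qed.

Definition fs (s t : R) : R := Rpower t (s - 1) * exp (- t).

Lemma fs_pos s t : 0 < fs s t.
Proof. unfold fs. apply Rmult_lt_0_compat. apply Rpower_pos. apply exp_pos. Qed.

Lemma fs_cont s t : 0 < t -> continuous (fs s) t.
Proof. intros Ht. unfold fs. apply (continuous_mult (fun u => Rpower u (s-1)) (fun u => exp (- u))).
  apply cont_Rpower; auto. apply cont_expm. Qed.

Lemma fs_exRInt s a b : 0 < a -> 0 < b -> ex_RInt (fs s) a b.
Proof. intros Ha Hb. apply (ex_RInt_continuous (V := R_CompleteNormedModule)). intros z Hz. apply fs_cont.
  assert (0 < Rmin a b) by (apply Rmin_pos; auto). lra. Qed.

Definition Gint (s t : R) : R := RInt (fs s) 1 t.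

Lemma Gint_deriv s t : 0 < t -> is_derive (Gint s) t (fs s t).
Proof.
  intros Ht. apply (is_derive_RInt (fs s) (Gint s) 1).
  - assert (He : 0 < t / 2) by lra. exists (mkposreal _ He). intros b Hb.
    assert (Hb' : Rabs (b - t) < t / 2) by exact Hb. apply Rabs_lt_between in Hb'.
    apply (RInt_correct (V := R_CompleteNormedModule)). apply fs_exRInt; lra.
  - apply fs_cont; auto.
Qed.

Lemma Gint_incr s a b : 0 < a -> a <= b -> Gint s a <= Gint s b.
Proof.
  intros Ha Hab. unfold Gint.
  rewrite <- (RInt_Chasles (fs s) 1 a b) by (apply fs_exRInt; lra).
  assert (0 <= RInt (fs s) a b).
  { apply RInt_ge_0; auto. apply fs_exRInt; lra. intros; left; apply fs_pos. }
  change (plus ?x ?y) with (x + y). lra.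
Qed.

Lemma Gint_ub s : exists M, forall t, 0 < t -> Gint s t <= M.
Proof.
  destruct (proj1 (filterlim_locally _ _) (lim_pow_exp_inf (s + 1)) (mkposreal 1 Rlt_0_1)) as [T0 HT0].
  set (T := Rmax T0 1 + 1).
  assert (HT1 : 1 < T) by (unfold T; pose proof (Rmax_r T0 1); lra).
  assert (HT2 : T0 < T) by (unfold T; pose proof (Rmax_l T0 1); lra).
  exists (Gint s T + 1). intros t Ht.
  destruct (Rle_lt_dec t T) as [Hle|Hlt].
  - pose proof (Gint_incr s t T Ht Hle). lra.
  - unfold Gint. rewrite <- (RInt_Chasles (fs s) 1 T t) by (apply fs_exRInt; lra).
    change (plus ?x ?y) with (x + y).
    assert (Hi : is_RInt (fun u => / u ^ 2) T t (minus (- / t) (- / T))).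
    { apply (is_RInt_derive (fun u => - / u)).
      - intros x Hx. assert (0 < x) by (assert (0 < Rmin T t) by (apply Rmin_pos; lra); lra).
        auto_derive. lra. field. lra.
      - intros x Hx. assert (0 < x) by (assert (0 < Rmin T t) by (apply Rmin_pos; lra); lra).
        apply (ex_derive_continuous (fun u => / u ^ 2)). auto_derive. intro Hc; nra. }
    assert (RInt (fs s) T t <= RInt (fun u => / u ^ 2) T t).
    { apply RInt_le. lra. apply fs_exRInt; lra. eexists; exact Hi.
      intros x Hx. specialize (HT0 x ltac:(lra)).
      assert (Hb : Rabs (Rpower x (s+1) * exp (- x) - 0) < 1) by exact HT0.
      rewrite Rminus_0_r, Rabs_pos_eq in Hb by (left; apply Rmult_lt_0_compat; [apply Rpower_pos|apply exp_pos]).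
      unfold fs. replace (s + 1) with ((s - 1) + INR 2) in Hb by (simpl; ring).
      rewrite Rpower_plus, Rpower_pow in Hb by lra.
      apply (Rmult_le_reg_r (x ^ 2)). apply pow_lt; lra.
      rewrite Rinv_l by (apply pow_nonzero; lra). nra. }
    rewrite (is_RInt_unique _ _ _ _ Hi) in H. unfold minus, plus, opp in H; simpl in H.
    assert (0 < / t) by (apply Rinv_0_lt_compat; lra).
    assert (/ T < 1) by (rewrite <- Rinv_1; apply Rinv_lt_contravar; lra). lra.
Qed.

Lemma Gint_lb s : 0 < s -> forall t, 0 < t -> - / s <= Gint s t.
Proof.
  intros Hs t Ht. assert (0 < / s) by (apply Rinv_0_lt_compat; lra).
  destruct (Rle_lt_dec 1 t) as [Hle|Hlt].
  - pose proof (Gint_incr s 1 t Rlt_0_1 Hle). unfold Gint at 1 in H0. rewrite RInt_point in H0. 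
    change zero with 0 in H0. lra.
  - unfold Gint. rewrite <- (opp_RInt_swap (V := R_CompleteNormedModule)) by (apply fs_exRInt; lra). change (opp ?x) with (- x).
    assert (Hi : is_RInt (fun u => Rpower u (s - 1)) t 1 (minus (/ s * Rpower 1 s) (/ s * Rpower t s))).
    { apply (is_RInt_derive (fun u => / s * Rpower u s)).
      - intros x Hx. assert (0 < x) by (assert (0 < Rmin t 1) by (apply Rmin_pos; lra); lra).
        replace (Rpower x (s - 1)) with (/ s * (s * Rpower x (s - 1))) by (field; lra).
        apply is_derive_scal. apply is_derive_Rpower; auto.
      - intros x Hx. apply cont_Rpower. assert (0 < Rmin t 1) by (apply Rmin_pos; lra); lra. }
    assert (RInt (fs s) t 1 <= RInt (fun u => Rpower u (s - 1)) t 1).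
    { apply RInt_le. lra. apply fs_exRInt; lra. eexists; exact Hi.
      intros x Hx. unfold fs. pose proof (Rpower_pos x (s - 1)).
      assert (exp (- x) <= 1) by (rewrite <- exp_0; apply Rlt_le, exp_increasing; lra). nra. }
    rewrite (is_RInt_unique _ _ _ _ Hi) in H0. unfold minus, plus, opp in H0; simpl in H0.
    replace (Rpower 1 s) with 1 in H0 by (unfold Rpower; rewrite ln_1, Rmult_0_r, exp_0; reflexivity). pose proof (Rpower_pos t s).
    assert (/ s * Rpower t s > 0) by (apply Rmult_lt_0_compat; lra). lra.
Qed.

Lemma fprod_pos (Fb : (R -> Prop) -> Prop) (P : R * R -> Prop) :
  Fb (fun b => 0 < b) -> (forall a b, 0 < a -> 0 < b -> P (a, b)) ->
  filter_prod (at_right 0) Fb P.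
Proof.
  intros HF HP. apply (Filter_prod _ _ _ (fun a => 0 < a) (fun b => 0 < b)); auto.
  - exists (mkposreal 1 Rlt_0_1). intros y _ Hy. exact Hy.
Qed.

Lemma between_pos a b x : 0 < a -> 0 < b -> Rmin a b <= x -> 0 < x.
Proof. intros Ha Hb H. assert (0 < Rmin a b) by (apply Rmin_pos; auto). lra. Qed.

Lemma Gamma_main s : 0 < s ->
  is_RInt_gen (fs s) (at_right 0) (Rbar_locally p_infty) (Gamma s) /\ 0 < Gamma s.
Proof.
  intros Hs.
  destruct (Gint_ub s) as [M HM].
  destruct (incr_lim_p (Gint s) M (Gint_incr s) HM) as [Li [HLi HLi2]].
  destruct (incr_lim_0 (Gint s) (- / s) (Gint_incr s) (Gint_lb s Hs)) as [L0 [HL0 HL02]].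
  assert (HI : is_RInt_gen (fs s) (at_right 0) (Rbar_locally p_infty) (Li - L0)).
  { apply (is_RInt_gen_ext (Derive (Gint s))).
    - apply fprod_pos. exists 0; auto. intros a b Ha Hb x Hx. simpl in Hx.
      apply is_derive_unique, Gint_deriv. apply (between_pos a b); lra.
    - apply is_RInt_gen_Derive.
      + apply fprod_pos. exists 0; auto. intros a b Ha Hb x Hx. simpl in Hx.
        eexists. apply Gint_deriv. apply (between_pos a b); lra.
      + apply fprod_pos. exists 0; auto. intros a b Ha Hb x Hx. simpl in Hx.
        assert (Hx0 : 0 < x) by (apply (between_pos a b); lra).
        apply (continuous_ext_loc _ (fs s)).
        * assert (He : 0 < x / 2) by lra. exists (mkposreal _ He). intros y Hy.
          assert (Hy' : Rabs (y - x) < x / 2) by exact Hy. apply Rabs_lt_between in Hy'.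
          symmetry. apply is_derive_unique, Gint_deriv. lra.
        * apply fs_cont; auto.
      + exact HL0.
      + exact HLi. }
  unfold Gamma. fold (fs s). rewrite (is_RInt_gen_unique _ _ HI). split; [exact HI|].
  assert (Hg : Gint s (1/2) < Gint s 2).
  { unfold Gint. rewrite <- (RInt_Chasles (fs s) 1 (1/2) 2) by (apply fs_exRInt; lra).
    change (plus ?x ?y) with (x + y).
    assert (0 < RInt (fs s) (1/2) 2).
    { apply RInt_gt_0. lra. intros; apply fs_pos. intros x Hx; apply fs_cont; lra. }
    lra. }
  pose proof (HLi2 2 ltac:(lra)). pose proof (HL02 (1/2) ltac:(lra)). lra.
Qed.

Lemma lim_pow_exp_0 (s : R) : 0 < s ->
  filterlim (fun t => Rpower t s * exp (- t)) (at_right 0) (locally 0).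
Proof.
  intros Hs. apply filterlim_locally. intros eps.
  pose proof (proj1 (filterlim_locally _ _) (lim_Rpower_0 s Hs) eps) as [d Hd].
  exists d. intros y Hy Hy0. specialize (Hd y Hy Hy0).
  assert (H1 : Rabs (Rpower y s - 0) < eps) by exact Hd.
  change (Rabs (Rpower y s * exp (- y) - 0) < eps).
  rewrite Rminus_0_r in *. pose proof (Rpower_pos y s). pose proof (exp_pos (- y)).
  assert (exp (- y) <= 1) by (rewrite <- exp_0; apply Rlt_le, exp_increasing; lra).
  rewrite Rabs_pos_eq in * by nra. nra.
Qed.

Lemma Gamma_succ s : 0 < s -> Gamma (s + 1) = s * Gamma s.
Proof.
  intros Hs.
  set (h := fun t => Rpower t s * exp (- t)).
  assert (Hd : forall t, 0 < t -> is_derive h t (s * fs s t - fs (s + 1) t)).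
  { intros t Ht. unfold h, fs.
    replace (s * (Rpower t (s - 1) * exp (- t)) - Rpower t (s + 1 - 1) * exp (- t))
      with ((s * Rpower t (s - 1)) * exp (- t) + Rpower t s * (- exp (- t)))
      by (replace (s + 1 - 1) with s by ring; ring).
    apply (isd_mult (fun u => Rpower u s) (fun u => exp (- u))). apply is_derive_Rpower; auto. apply isd_expm. }
  assert (HI : is_RInt_gen (Derive h) (at_right 0) (Rbar_locally p_infty) (0 - 0)).
  { apply is_RInt_gen_Derive.
    + apply fprod_pos. exists 0; auto. intros a b Ha Hb x Hx. simpl in Hx.
      eexists. apply Hd. apply (between_pos a b); lra.
    + apply fprod_pos. exists 0; auto. intros a b Ha Hb x Hx. simpl in Hx.
      assert (Hx0 : 0 < x) by (apply (between_pos a b); lra).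
      apply (continuous_ext_loc _ (fun t => s * fs s t - fs (s + 1) t)).
      * assert (He : 0 < x / 2) by lra. exists (mkposreal _ He). intros y Hy.
        assert (Hy' : Rabs (y - x) < x / 2) by exact Hy. apply Rabs_lt_between in Hy'.
        symmetry. apply is_derive_unique, Hd. lra.
      * apply (continuous_minus (fun t => s * fs s t) (fs (s+1))).
        apply (continuous_scal_r s (fs s)). apply fs_cont; auto. apply fs_cont; auto.
    + apply lim_pow_exp_0; auto.
    + apply lim_pow_exp_inf. }
  pose proof (is_RInt_gen_scal _ s _ (proj1 (Gamma_main s Hs))) as HS.
  pose proof (is_RInt_gen_minus _ _ _ _ HS HI) as HM.
  assert (HM' : is_RInt_gen (fs (s + 1)) (at_right 0) (Rbar_locally p_infty) (s * Gamma s)).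
  { apply (is_RInt_gen_ext (fun y => minus (scal s (fs s y)) (Derive h y))).
    - apply fprod_pos. exists 0; auto. intros a b Ha Hb x Hx. simpl in Hx.
      assert (Hx0 : 0 < x) by (apply (between_pos a b); lra).
      rewrite (is_derive_unique _ _ _ (Hd x Hx0)). unfold minus, plus, opp, scal; simpl.
      unfold mult; simpl. ring.
    - replace (s * Gamma s) with (minus (scal s (Gamma s)) (0 - 0)); [exact HM|].
      unfold minus, plus, opp, scal; simpl. unfold mult; simpl. ring. }
  unfold Gamma at 1. fold (fs (s + 1)). apply (is_RInt_gen_unique _ _ HM').
Qed.

Lemma radius_inf (a : nat -> R) (C : R) :
  (forall n, 0 < a n) -> (forall n, a (S n) <= C / INR (S n) * a n) -> CV_radius a = p_infty.
Proof.
  intros Hp Hr. apply CV_radius_infinite_DAlembert.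
  - intros n. specialize (Hp n). lra.
  - apply (is_lim_seq_le_le (fun _ => 0) _ (fun n => C / INR (S n))).
    + intros n. rewrite Rabs_pos_eq.
      split. left. apply Rdiv_lt_0_compat; auto.
      specialize (Hr n). specialize (Hp n). apply (Rmult_le_reg_r (a n)); auto.
      unfold Rdiv at 1. rewrite Rmult_assoc, Rinv_l, Rmult_1_r by lra. exact Hr.
      left. apply Rdiv_lt_0_compat; auto.
    + apply is_lim_seq_const.
    + replace (Finite 0) with (Rbar_mult C 0) by (simpl; f_equal; ring).
      apply (is_lim_seq_scal_l (fun n => / INR (S n)) C 0).
      replace (Finite 0) with (Rbar_inv p_infty) by reflexivity.
      apply is_lim_seq_inv. apply (is_lim_seq_incr_1 INR). apply is_lim_seq_INR. discriminate.
Qed.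

Definition bco (l : R) (k : nat) : R := / (INR (Factorial.fact k) * Gamma (INR k + l + 1)).
Definition fco (x l : R) (k : nat) : R := x ^ k * bco l k.
Definition esum (x : R) (m : nat) : R := sum_f_R0 (fun k => x ^ k / INR (Factorial.fact k)) m.
Definition dco (x l : R) (m : nat) : R := esum x m / Gamma (INR m + l + 1).

Lemma Gamma_pos s : 0 < s -> 0 < Gamma s.
Proof. intros H; apply (Gamma_main s H). Qed.

Lemma INR_fact_pos k : 0 < INR (Factorial.fact k).
Proof. apply lt_0_INR. apply Factorial.lt_O_fact. Qed.

Lemma bco_pos l k : -1 < l -> 0 < bco l k.
Proof. intros Hl. unfold bco. apply Rinv_0_lt_compat, Rmult_lt_0_compat. apply INR_fact_pos.
  apply Gamma_pos. pose proof (pos_INR k). lra. Qed.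

Lemma fco_pos x l k : 0 < x -> -1 < l -> 0 < fco x l k.
Proof. intros. unfold fco. apply Rmult_lt_0_compat. apply pow_lt; auto. apply bco_pos; auto. Qed.

Lemma esum_pos x m : 0 < x -> 1 <= esum x m.
Proof. intros Hx. unfold esum. induction m as [|m IH]; simpl. lra.
  assert (0 < x ^ S m / INR (Factorial.fact (S m))). { apply Rdiv_lt_0_compat. apply pow_lt; auto. apply INR_fact_pos. }
  simpl in H. lra. Qed.

Lemma esum_S x m : esum x (S m) = esum x m + x ^ S m / INR (Factorial.fact (S m)).
Proof. reflexivity. Qed.

Lemma esum_ratio x m : 0 < x -> esum x (S m) <= (1 + x) * esum x m.
Proof. intros Hx. rewrite esum_S.
  assert (x ^ S m / INR (Factorial.fact (S m)) <= x * esum x m).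
  { destruct m as [|m].
    - unfold esum; simpl. lra.
    - rewrite esum_S.
      assert (x ^ S (S m) / INR (Factorial.fact (S (S m))) <= x * (x ^ S m / INR (Factorial.fact (S m)))).
      { rewrite fact_simpl, mult_INR. simpl pow.
        pose proof (INR_fact_pos (S m)). pose proof (pos_INR (S m)). 
        assert (1 <= INR (S (S m))) by (apply (le_INR 1); lia).
        unfold Rdiv. rewrite Rinv_mult. 
        assert (0 < / INR (Factorial.fact (S m))) by (apply Rinv_0_lt_compat; auto).
        assert (/ INR (S (S m)) <= 1) by (rewrite <- Rinv_1; apply Rinv_le_contravar; lra).
        assert (0 < x * (x * x ^ m)) by (apply Rmult_lt_0_compat; auto; apply Rmult_lt_0_compat; auto; apply pow_lt; auto).
        set (B := / INR (Factorial.fact (S m))) in *.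
        set (C := / INR (S (S m))) in *.
        replace (x * (x * x ^ m) * (C * B)) with ((x * (x * x ^ m) * B) * C) by ring.
        replace (x * (x * x ^ m * B)) with ((x * (x * x ^ m) * B) * 1) by ring.
        apply Rmult_le_compat_l; auto. apply Rlt_le, Rmult_lt_0_compat; auto. }
      assert (0 <= esum x m) by (pose proof (esum_pos x m Hx); lra). nra. }
  lra.
Qed.

Lemma dco_pos x l m : 0 < x -> -1 < l -> 0 < dco x l m.
Proof. intros. unfold dco. apply Rdiv_lt_0_compat. pose proof (esum_pos x m H); lra.
  apply Gamma_pos. pose proof (pos_INR m). lra. Qed.

Lemma Gamma_S k l : -1 < l -> Gamma (INR (S k) + l + 1) = (INR k + l + 1) * Gamma (INR k + l + 1).
Proof. intros Hl. rewrite S_INR. replace (INR k + 1 + l + 1) with ((INR k + l + 1) + 1) by ring.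
  apply Gamma_succ. pose proof (pos_INR k). lra. Qed.

Lemma fco_radius x l : 0 < x -> -1 < l -> CV_radius (fco x l) = p_infty.
Proof.
  intros Hx Hl. apply (radius_inf _ (x / (l + 1))). intros; apply fco_pos; auto.
  intros n. unfold fco, bco. rewrite Gamma_S by auto. rewrite fact_simpl, mult_INR.
  pose proof (INR_fact_pos n). pose proof (pos_INR n).
  assert (HG : 0 < Gamma (INR n + l + 1)) by (apply Gamma_pos; lra).
  assert (HS : 0 < INR (S n)) by (apply lt_0_INR; lia).
  simpl pow. 
  replace (x * x ^ n * / (INR (S n) * INR (Factorial.fact n) * ((INR n + l + 1) * Gamma (INR n + l + 1))))
    with ((x / (INR n + l + 1)) / INR (S n) * (x ^ n * / (INR (Factorial.fact n) * Gamma (INR n + l + 1))))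
    by (field; repeat split; lra).
  apply Rmult_le_compat_r. left. apply Rmult_lt_0_compat. apply pow_lt; auto. apply Rinv_0_lt_compat, Rmult_lt_0_compat; auto.
  unfold Rdiv. apply Rmult_le_compat_r. left; apply Rinv_0_lt_compat; auto.
  apply Rmult_le_compat_l. lra. apply Rinv_le_contravar; lra.
Qed.

Lemma dco_radius x l : 0 < x -> 0 < l -> CV_radius (dco x l) = p_infty.
Proof.
  intros Hx Hl. apply (radius_inf _ (1 + x)). intros; apply dco_pos; auto; lra.
  intros n. unfold dco. rewrite Gamma_S by lra.
  pose proof (pos_INR n).
  assert (HG : 0 < Gamma (INR n + l + 1)) by (apply Gamma_pos; lra).
  assert (HS : INR (S n) = INR n + 1) by apply S_INR.
  pose proof (esum_ratio x n Hx). pose proof (esum_pos x n Hx).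
  replace (esum x (S n) / ((INR n + l + 1) * Gamma (INR n + l + 1)))
    with (esum x (S n) * / (INR n + l + 1) * / Gamma (INR n + l + 1)) by (field; split; lra).
  replace ((1 + x) / INR (S n) * (esum x n / Gamma (INR n + l + 1)))
    with ((1 + x) * esum x n * / INR (S n) * / Gamma (INR n + l + 1)) by (rewrite HS; field; split; lra).
  apply Rmult_le_compat_r. left; apply Rinv_0_lt_compat; auto.
  pose proof (esum_pos x (S n) Hx).
  apply Rmult_le_compat. lra. left; apply Rinv_0_lt_compat; lra. auto.
  rewrite HS. apply Rinv_le_contravar; lra.
Qed.

Lemma Rpower_sqrt_pow u a k : 0 < u -> Rpower (sqrt u) (2 * INR k + a) = u ^ k * Rpower u (a / 2).
Proof.
  intros Hu. rewrite <- Rpower_sqrt by auto. rewrite Rpower_mult.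
  replace (/ 2 * (2 * INR k + a)) with (INR k + a / 2) by field.
  rewrite Rpower_plus, Rpower_pow by auto. reflexivity.
Qed.

Lemma BesselI_eq l u : 0 < u -> BesselI l (2 * sqrt u) = Rpower u (l / 2) * PSeries (bco l) u.
Proof.
  intros Hu. unfold BesselI, PSeries. rewrite <- Series_scal_l. apply Series_ext. intros k.
  replace (2 * sqrt u / 2) with (sqrt u) by field. rewrite Rpower_sqrt_pow by auto.
  unfold bco, scal; simpl; unfold mult; simpl. try rewrite pow_n_pow. unfold Rdiv. ring.
Qed.

Lemma PSeries_scale b x t : PSeries b (x * t) = PSeries (fun k => x ^ k * b k) t.
Proof.
  unfold PSeries. apply Series_ext. intros k. unfold scal; simpl; unfold mult; simpl.
  try rewrite !pow_n_pow; rewrite Rpow_mult_distr. ring.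
Qed.

Lemma Fmu_eq l x y : 0 < x -> 0 < y -> -1 < l ->
  Fmu l x y = exp (- x - y) * Rpower y l * PSeries (fco x l) y.
Proof.
  intros Hx Hy Hl. unfold Fmu. rewrite BesselI_eq by (apply Rmult_lt_0_compat; auto).
  rewrite PSeries_scale. fold (fco x l).
  assert (H : Rpower (y / x) (l / 2) * Rpower (x * y) (l / 2) = Rpower y l).
  { rewrite Rpower_mult_distr by (try apply Rdiv_lt_0_compat; try apply Rmult_lt_0_compat; auto).
    replace (y / x * (x * y)) with (Rpower y (INR 2)) by (rewrite Rpower_pow by auto; simpl; field; lra).
    rewrite Rpower_mult. f_equal. simpl; field. }
  rewrite <- H. ring.
Qed.

Lemma integrand_eq mu x t : 0 < x -> 0 < t ->
  Rpower t ((mu - 1) / 2) * exp (- t - x) * BesselI (mu - 1) (2 * sqrt (x * t)) =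
  Rpower x ((mu - 1) / 2) * (exp (- x - t) * Rpower t (mu - 1) * PSeries (fco x (mu - 1)) t).
Proof.
  intros Hx Ht. rewrite BesselI_eq by (apply Rmult_lt_0_compat; auto).
  rewrite PSeries_scale. fold (fco x (mu - 1)).
  rewrite <- Rpower_mult_distr by auto.
  replace (- t - x) with (- x - t) by ring.
  replace (Rpower t (mu - 1)) with (Rpower t ((mu - 1) / 2) * Rpower t ((mu - 1) / 2))
    by (rewrite <- Rpower_plus; f_equal; field).
  ring.
Qed.

Lemma rad_ok (a : nat -> R) t : CV_radius a = p_infty -> Rbar_lt (Rabs t) (CV_radius a).
Proof. intros H; rewrite H; exact I. Qed.

Lemma exps_of (a : nat -> R) t : CV_radius a = p_infty -> ex_pseries a t.
Proof. intros H. apply CV_radius_inside. apply rad_ok; auto. Qed.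

Lemma PS_id_coef x l n : 0 < x -> 0 < l ->
  fco x (l - 1) n = PS_plus (PS_scal l (dco x l))
     (PS_plus (PS_incr_1 (PS_derive (dco x l))) (PS_scal (-1) (PS_incr_1 (dco x l)))) n.
Proof.
  intros Hx Hl. unfold PS_plus, PS_scal, PS_incr_1, PS_derive.
  assert (Hp : forall a b : R, plus a b = a + b) by reflexivity.
  assert (Hs : forall a b : R, scal a b = a * b) by reflexivity.
  assert (Hz : (zero : R) = 0) by reflexivity.
  repeat match goal with |- context [plus ?a ?b] => change (plus a b) with (Rplus a b) end.
  repeat match goal with |- context [scal ?a ?b] => change (scal a b) with (Rmult a b) end.
  repeat match goal with |- context [@zero ?T] => change (@zero T) with 0 end.
  destruct n as [|m].
  - unfold fco, dco, bco, esum. simpl.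
    replace (0 + (l - 1) + 1) with l by ring. replace (0 + l + 1) with (l + 1) by ring.
    rewrite Gamma_succ by auto. assert (0 < Gamma l) by (apply Gamma_pos; auto). field. lra.
  - unfold fco, dco, bco. rewrite esum_S.
    pose proof (pos_INR m) as Hm.
    replace (INR (S m) + (l - 1) + 1) with (INR (S m) + l) by ring.
    replace (INR m + l + 1) with (INR (S m) + l) by (rewrite S_INR; ring).
    rewrite Gamma_succ by (rewrite S_INR; lra).
    assert (0 < Gamma (INR (S m) + l)) by (apply Gamma_pos; rewrite S_INR; lra).
    pose proof (INR_fact_pos (S m)). assert (0 < INR (S m)) by (apply lt_0_INR; lia).
    rewrite !S_INR in *. field. repeat split; lra.
Qed.

Lemma PS_id x l t : 0 < x -> 0 < l ->
  l * PSeries (dco x l) t + t * PSeries (PS_derive (dco x l)) t - t * PSeries (dco x l) t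
  = PSeries (fco x (l - 1)) t.
Proof.
  intros Hx Hl. set (d := dco x l).
  assert (Rd : CV_radius d = p_infty) by (apply dco_radius; auto).
  assert (E1 : ex_pseries d t) by (apply exps_of; auto).
  assert (E2 : ex_pseries (PS_derive d) t) by (apply ex_pseries_derive, rad_ok; auto).
  rewrite (PSeries_ext _ _ t (fun n => PS_id_coef x l n Hx Hl)). fold d.
  rewrite PSeries_plus, PSeries_plus, !PSeries_scal, !PSeries_incr_1.
  - lra.
  - apply ex_pseries_incr_1; auto.
  - apply ex_pseries_scal. apply Rmult_comm. apply ex_pseries_incr_1; auto.
  - apply ex_pseries_scal. apply Rmult_comm. auto.
  - apply ex_pseries_plus. apply ex_pseries_incr_1; auto.
    apply ex_pseries_scal. apply Rmult_comm. apply ex_pseries_incr_1; auto.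
Qed.

Definition Sf (x l t : R) : R := exp (- x - t) * Rpower t l * PSeries (dco x l) t.

Lemma Sf_deriv x l t : 0 < x -> 0 < l -> 0 < t ->
  is_derive (Sf x l) t (exp (- x - t) * Rpower t (l - 1) * PSeries (fco x (l - 1)) t).
Proof.
  intros Hx Hl Ht. unfold Sf.
  assert (H1 : is_derive (fun u => exp (- x - u)) t (- exp (- x - t))) by (auto_derive; auto; replace (- x + - t) with (- x - t) by ring; ring).
  pose proof (is_derive_Rpower l t Ht) as H2.
  pose proof (is_derive_PSeries (dco x l) t (rad_ok _ t (dco_radius x l Hx Hl))) as H3.
  pose proof (isd_mult _ _ _ _ _ H1 H2) as H12.
  pose proof (isd_mult _ _ _ _ _ H12 H3) as H.
  cbv beta in H.
  replace (exp (- x - t) * Rpower t (l - 1) * PSeries (fco x (l - 1)) t) with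
    ((- exp (- x - t) * Rpower t l + exp (- x - t) * (l * Rpower t (l - 1))) *
     PSeries (dco x l) t +
     exp (- x - t) * Rpower t l * PSeries (PS_derive (dco x l)) t); [exact H|].
  rewrite <- (PS_id x l t Hx Hl).
  replace (Rpower t l) with (t * Rpower t (l - 1)).
  ring.
  replace l with ((l - 1) + 1) at 2 by ring. rewrite Rpower_plus, Rpower_1 by auto. ring.
Qed.

Lemma lim_at_point (f : R -> R) y : filterlim f (at_point y) (locally (f y)).
Proof. intros P HP. unfold filtermap, at_point. apply locally_singleton. exact HP. Qed.

Lemma cont_fcoF x l t : 0 < x -> -1 < l -> 0 < t ->
  continuous (fun u => exp (- x - u) * Rpower u l * PSeries (fco x l) u) t.
Proof.
  intros Hx Hl Ht.
  apply (continuous_mult (fun u => exp (- x - u) * Rpower u l) (PSeries (fco x l))).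
  apply (continuous_mult (fun u => exp (- x - u)) (fun u => Rpower u l)).
  apply (ex_derive_continuous (fun u => exp (- x - u))). auto_derive; auto.
  apply cont_Rpower; auto.
  apply continuity_pt_filterlim. apply PSeries_continuity. apply rad_ok. apply fco_radius; auto.
Qed.

Lemma at_right_le_locally : filter_le (at_right 0) (locally 0).
Proof. intros P [e He]. exists e. intros y Hy _. apply He; auto. Qed.

Lemma Sf_lim0 x l : 0 < x -> 0 < l -> filterlim (Sf x l) (at_right 0) (locally 0).
Proof.
  intros Hx Hl.
  apply (filterlim_ext (fun t => mult (Rpower t l) (exp (- x - t) * PSeries (dco x l) t))).
  { intros t. unfold Sf, mult; simpl. ring. }
  replace 0 with (mult 0 (exp (- x - 0) * PSeries (dco x l) 0)) at 2 by (unfold mult; simpl; ring).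
  apply (filterlim_comp_2 (G := locally 0) (H := locally (exp (- x - 0) * PSeries (dco x l) 0)) (fun t => Rpower t l) (fun t => exp (- x - t) * PSeries (dco x l) t) mult).
  - apply lim_Rpower_0; auto.
  - apply (filterlim_filter_le_1 _ at_right_le_locally).
    apply (continuous_mult (fun u => exp (- x - u)) (PSeries (dco x l))).
    apply (ex_derive_continuous (fun u => exp (- x - u))). auto_derive; auto.
    apply continuity_pt_filterlim. apply PSeries_continuity. apply rad_ok. apply dco_radius; auto.
  - apply (filterlim_mult (K := R_AbsRing)).
Qed.

Lemma Pmu_eq mu x y : 0 < mu -> 0 < x -> 0 < y -> Pmu mu x y = Sf x mu y.
Proof.
  intros Hmu Hx Hy.
  set (g := fun u => exp (- x - u) * Rpower u (mu - 1) * PSeries (fco x (mu - 1)) u).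
  assert (Hd : forall t, 0 < t -> is_derive (Sf x mu) t (g t)) by (intros; apply Sf_deriv; auto).
  assert (HI : is_RInt_gen (Derive (Sf x mu)) (at_right 0) (at_point y) (Sf x mu y - 0)).
  { apply is_RInt_gen_Derive.
    + apply fprod_pos. exact Hy. intros a b Ha Hb z Hz. simpl in Hz.
      eexists. apply Hd. apply (between_pos a b); lra.
    + apply fprod_pos. exact Hy. intros a b Ha Hb z Hz. simpl in Hz.
      assert (Hz0 : 0 < z) by (apply (between_pos a b); lra).
      apply (continuous_ext_loc _ g).
      * assert (He : 0 < z / 2) by lra. exists (mkposreal _ He). intros u Hu.
        assert (Hu' : Rabs (u - z) < z / 2) by exact Hu. apply Rabs_lt_between in Hu'.
        symmetry. apply is_derive_unique, Hd. lra.
      * apply cont_fcoF; auto; lra.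
    + apply Sf_lim0; auto.
    + apply lim_at_point. }
  set (c := Rpower x ((mu - 1) / 2)).
  pose proof (is_RInt_gen_scal _ c _ HI) as HS.
  assert (HJ : is_RInt_gen (fun t => Rpower t ((mu - 1) / 2) * exp (- t - x) * BesselI (mu - 1) (2 * sqrt (x * t)))
      (at_right 0) (at_point y) (c * Sf x mu y)).
  { apply (is_RInt_gen_ext (fun u => scal c (Derive (Sf x mu) u))).
    - apply fprod_pos. exact Hy. intros a b Ha Hb z Hz. simpl in Hz.
      assert (Hz0 : 0 < z) by (apply (between_pos a b); lra).
      rewrite (is_derive_unique _ _ _ (Hd z Hz0)). rewrite integrand_eq by auto.
      reflexivity.
    - replace (c * Sf x mu y) with (scal c (Sf x mu y - 0)); [exact HS|].
      unfold scal; simpl; unfold mult; simpl. ring. }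
  unfold Pmu. rewrite (is_RInt_gen_unique _ _ HJ). unfold c.
  rewrite <- Rmult_assoc, <- Rpower_plus.
  replace ((1 - mu) / 2 + (mu - 1) / 2) with 0 by field. rewrite Rpower_O by auto. ring.
Qed.

Lemma Series_zero : Series (fun _ => 0) = 0.
Proof. rewrite <- (Series_ext (fun n => 0 * (fun _ => 1) n)). rewrite Series_scal_l. ring.
  intros; ring. Qed.

Lemma PSeries_ge (a : nat -> R) y N : ex_pseries a y -> 0 <= y -> (forall n, 0 <= a n) ->
  sum_f_R0 (fun k => a k * y ^ k) N <= PSeries a y.
Proof.
  intros Ha Hy Hn.
  assert (E : ex_series (fun k => a k * y ^ k)).
  { destruct Ha as [l Hl]. exists l. eapply is_series_ext; [|exact Hl].
    intros k; unfold scal; simpl; unfold mult; simpl; try rewrite pow_n_pow; ring. }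
  assert (HP : PSeries a y = Series (fun k => a k * y ^ k)).
  { unfold PSeries. apply Series_ext. intros k; unfold scal; simpl; unfold mult; simpl; try rewrite pow_n_pow; ring. }
  rewrite HP. rewrite (Series_incr_n _ (S N)) by (lia || auto). simpl pred.
  assert (0 <= Series (fun k => a (S N + k)%nat * y ^ (S N + k))).
  { rewrite <- Series_zero. apply Series_le. intros n; split. lra.
    apply Rmult_le_pos; auto. apply pow_le; auto.
    apply (ex_series_incr_n (fun k => a k * y ^ k) (S N)). auto. }
  lra.
Qed.

Lemma PSeries_pos (a : nat -> R) y : CV_radius a = p_infty -> 0 < y -> (forall n, 0 < a n) ->
  0 < PSeries a y.
Proof.
  intros Ha Hy Hn. eapply Rlt_le_trans; [|apply (PSeries_ge a y 0); [apply exps_of; auto|lra|intros; left; auto]].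
  simpl. specialize (Hn 0%nat). lra.
Qed.

Lemma Fmu_pos l x y : 0 < x -> 0 < y -> -1 < l -> 0 < Fmu l x y.
Proof.
  intros. rewrite Fmu_eq by auto. apply Rmult_lt_0_compat. apply Rmult_lt_0_compat.
  apply exp_pos. apply Rpower_pos. apply PSeries_pos; auto. apply fco_radius; auto.
  intros; apply fco_pos; auto.
Qed.

Lemma Sf_pos l x y : 0 < x -> 0 < y -> 0 < l -> 0 < Sf x l y.
Proof.
  intros. unfold Sf. apply Rmult_lt_0_compat. apply Rmult_lt_0_compat.
  apply exp_pos. apply Rpower_pos. apply PSeries_pos; auto. apply dco_radius; auto.
  intros; apply dco_pos; auto; lra.
Qed.

Lemma dco_split x l n : 0 < l ->
  dco x l n = PS_plus (fco x l) (PS_incr_1 (dco x (l + 1))) n.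
Proof.
  intros Hl. unfold PS_plus, PS_incr_1.
  repeat match goal with |- context [plus ?a ?b] => change (plus a b) with (Rplus a b) end.
  destruct n as [|m].
  - change (@zero R_NormedModule) with 0. unfold fco, dco, bco, esum. simpl. field.
    apply Rgt_not_eq, Gamma_pos. lra.
  - unfold fco, dco, bco. rewrite esum_S.
    replace (INR m + (l + 1) + 1) with (INR (S m) + l + 1) by (rewrite S_INR; ring).
    assert (0 < Gamma (INR (S m) + l + 1)) by (apply Gamma_pos; pose proof (pos_INR (S m)); lra).
    pose proof (INR_fact_pos (S m)). field. split; lra.
Qed.

Lemma Sf_step x l y : 0 < x -> 0 < y -> 0 < l -> Sf x l y = Fmu l x y + Sf x (l + 1) y.
Proof.
  intros Hx Hy Hl. rewrite Fmu_eq by (auto; lra). unfold Sf.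
  rewrite (PSeries_ext _ _ y (fun n => dco_split x l n Hl)).
  rewrite PSeries_plus, PSeries_incr_1.
  - rewrite Rpower_plus, Rpower_1 by auto. ring.
  - apply exps_of, fco_radius; auto; lra.
  - apply ex_pseries_incr_1. apply exps_of, dco_radius; auto; lra.
Qed.

Definition Aseq (x : R) (r : nat) : R := esum x r * INR (Factorial.fact r) / x ^ r.

Lemma Aseq_S x r : 0 < x -> Aseq x (S r) = Aseq x r * INR (S r) / x + 1.
Proof.
  intros Hx. unfold Aseq. rewrite esum_S, fact_simpl, mult_INR. simpl pow.
  pose proof (INR_fact_pos r). assert (0 < INR (S r)) by (apply lt_0_INR; lia).
  assert (0 < x ^ r) by (apply pow_lt; auto).
  field. repeat split; lra.
Qed.

Lemma Aseq_pos x r : 0 < x -> 0 < Aseq x r.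
Proof. intros Hx. unfold Aseq. apply Rdiv_lt_0_compat. apply Rmult_lt_0_compat.
  pose proof (esum_pos x r Hx); lra. apply INR_fact_pos. apply pow_lt; auto. Qed.

Lemma Aseq_incr x r : 0 < x -> Aseq x r <= Aseq x (S r).
Proof.
  intros Hx. induction r as [|r IH].
  - assert (A0 : Aseq x 0 = 1) by (unfold Aseq, esum; simpl; field).
    rewrite Aseq_S, A0 by auto. change (INR 1) with 1.
    assert (0 < 1 * 1 / x) by (apply Rdiv_lt_0_compat; lra). lra.
  - rewrite (Aseq_S x (S r)) by auto.
    assert (Hb : Aseq x (S r) = Aseq x r * INR (S r) / x + 1) by (apply Aseq_S; auto).
    pose proof (Aseq_pos x r Hx). pose proof (Aseq_pos x (S r) Hx).
    rewrite (S_INR (S r)). assert (0 <= INR (S r)) by apply pos_INR.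
    set (a := Aseq x r) in *. set (b := Aseq x (S r)) in *. set (n := INR (S r)) in *.
    rewrite Hb at 1.
    assert (a * n / x <= b * (n + 1) / x).
    { unfold Rdiv. apply Rmult_le_compat_r. left; apply Rinv_0_lt_compat; auto. nra. }
    lra.
Qed.

Lemma Aseq_mono x p r : 0 < x -> (p <= r)%nat -> Aseq x p <= Aseq x r.
Proof. intros Hx Hpr. induction Hpr. lra. pose proof (Aseq_incr x m Hx). lra. Qed.

Lemma esum_cross x p r : 0 < x -> (p <= r)%nat ->
  esum x p * (x ^ r / INR (Factorial.fact r)) <= esum x r * (x ^ p / INR (Factorial.fact p)).
Proof.
  intros Hx Hpr. pose proof (Aseq_mono x p r Hx Hpr) as H. unfold Aseq in H.
  pose proof (INR_fact_pos r). pose proof (INR_fact_pos p).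
  assert (0 < x ^ r) by (apply pow_lt; auto). assert (0 < x ^ p) by (apply pow_lt; auto).
  set (K := x ^ p * x ^ r / (INR (Factorial.fact p) * INR (Factorial.fact r))).
  assert (0 < K) by (unfold K; apply Rdiv_lt_0_compat; apply Rmult_lt_0_compat; auto).
  apply Rmult_le_compat_r with (r := K) in H; [|lra].
  unfold K in H. replace (esum x p * INR (Factorial.fact p) / x ^ p * (x ^ p * x ^ r / (INR (Factorial.fact p) * INR (Factorial.fact r))))
    with (esum x p * (x ^ r / INR (Factorial.fact r))) in H by (field; repeat split; lra).
  replace (esum x r * INR (Factorial.fact r) / x ^ r * (x ^ p * x ^ r / (INR (Factorial.fact p) * INR (Factorial.fact r))))
    with (esum x r * (x ^ p / INR (Factorial.fact p))) in H by (field; repeat split; lra).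
  exact H.
Qed.

Definition G2 (l : R) (k : nat) : R := Gamma (INR k + (l + 1) + 1).

Lemma G2_pos l k : 0 < l -> 0 < G2 l k.
Proof. intros. unfold G2. apply Gamma_pos. pose proof (pos_INR k). lra. Qed.

Definition phi (x l : R) (i j : nat) : R :=
  dco x l i * fco x (l + 1) j - dco x (l + 1) i * fco x l j.

Lemma phi_formula x l i j : 0 < l ->
  phi x l i j = (INR i - INR j) * (esum x i * (x ^ j / INR (Factorial.fact j))) / (G2 l i * G2 l j).
Proof.
  intros Hl. unfold phi, G2, dco, fco, bco.
  assert (Hi : Gamma (INR i + (l + 1) + 1) = (INR i + l + 1) * Gamma (INR i + l + 1)).
  { replace (INR i + (l + 1) + 1) with ((INR i + l + 1) + 1) by ring. apply Gamma_succ.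
    pose proof (pos_INR i). lra. }
  assert (Hj : Gamma (INR j + (l + 1) + 1) = (INR j + l + 1) * Gamma (INR j + l + 1)).
  { replace (INR j + (l + 1) + 1) with ((INR j + l + 1) + 1) by ring. apply Gamma_succ.
    pose proof (pos_INR j). lra. }
  rewrite Hi, Hj. pose proof (pos_INR i). pose proof (pos_INR j).
  assert (0 < Gamma (INR i + l + 1)) by (apply Gamma_pos; lra).
  assert (0 < Gamma (INR j + l + 1)) by (apply Gamma_pos; lra).
  pose proof (INR_fact_pos j).
  field. repeat split; lra.
Qed.

Lemma psi_nonneg x l i j : 0 < x -> 0 < l -> 0 <= phi x l i j + phi x l j i.
Proof.
  intros Hx Hl. rewrite !phi_formula by auto.
  pose proof (G2_pos l i Hl). pose proof (G2_pos l j Hl).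
  replace ((INR i - INR j) * (esum x i * (x ^ j / INR (Factorial.fact j))) / (G2 l i * G2 l j) +
     (INR j - INR i) * (esum x j * (x ^ i / INR (Factorial.fact i))) / (G2 l j * G2 l i))
    with ((INR i - INR j) * (esum x i * (x ^ j / INR (Factorial.fact j)) - esum x j * (x ^ i / INR (Factorial.fact i)))
          / (G2 l i * G2 l j)) by (pose proof (INR_fact_pos i); pose proof (INR_fact_pos j); field; repeat split; lra).
  apply Rdiv_le_0_compat; [|apply Rmult_lt_0_compat; auto].
  destruct (Compare_dec.le_lt_dec j i) as [Hji|Hij].
  - pose proof (esum_cross x j i Hx Hji). apply le_INR in Hji. apply Rmult_le_pos; lra.
  - pose proof (esum_cross x i j Hx (Nat.lt_le_incl _ _ Hij)). apply lt_INR in Hij.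
    replace ((INR i - INR j) * (esum x i * (x ^ j / INR (Factorial.fact j)) - esum x j * (x ^ i / INR (Factorial.fact i))))
      with ((INR j - INR i) * (esum x j * (x ^ i / INR (Factorial.fact i)) - esum x i * (x ^ j / INR (Factorial.fact j)))) by ring.
    apply Rmult_le_pos; lra.
Qed.

Definition Qc (x l : R) (N : nat) : R :=
  PS_mult (dco x l) (fco x (l + 1)) N - PS_mult (dco x (l + 1)) (fco x l) N.

Lemma Qc_sum x l N : Qc x l N = sum_f_R0 (fun k => phi x l k (N - k)) N.
Proof. unfold Qc, PS_mult, phi. rewrite <- minus_sum. reflexivity. Qed.

Lemma Qc_nonneg x l N : 0 < x -> 0 < l -> 0 <= Qc x l N.
Proof.
  intros Hx Hl. rewrite Qc_sum.
  assert (H : sum_f_R0 (fun k => phi x l k (N - k)) N = sum_f_R0 (fun k => phi x l (N - k) k) N).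
  { rewrite <- (sum_f_R0_skip (fun k => phi x l k (N - k))). apply sum_eq. intros i Hi.
    replace (N - (N - i))%nat with i by lia. reflexivity. }
  assert (H2 : 0 <= sum_f_R0 (fun k => phi x l k (N - k) + phi x l (N - k) k) N).
  { apply cond_pos_sum. intros n. apply psi_nonneg; auto. }
  rewrite sum_plus in H2. lra.
Qed.

Lemma Qc_1 x l : 0 < x -> 0 < l -> 0 < Qc x l 1.
Proof.
  intros Hx Hl. rewrite Qc_sum. simpl sum_f_R0. simpl minus.
  rewrite !phi_formula by auto. unfold esum. simpl.
  pose proof (G2_pos l 0 Hl). pose proof (G2_pos l 1 Hl).
  match goal with |- 0 < ?e => replace e with (1 / (G2 l 0 * G2 l 1)) by (field; split; lra) end.
  apply Rdiv_lt_0_compat. lra. apply Rmult_lt_0_compat; auto.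
Qed.

Lemma step_ineq x l y : 0 < x -> 0 < y -> 0 < l ->
  Sf x (l + 1) y * Fmu l x y < Sf x l y * Fmu (l + 1) x y.
Proof.
  intros Hx Hy Hl. rewrite !Fmu_eq by (auto; lra). unfold Sf.
  assert (R0 : CV_radius (dco x l) = p_infty) by (apply dco_radius; auto).
  assert (R1 : CV_radius (dco x (l + 1)) = p_infty) by (apply dco_radius; auto; lra).
  assert (R2 : CV_radius (fco x l) = p_infty) by (apply fco_radius; auto; lra).
  assert (R3 : CV_radius (fco x (l + 1)) = p_infty) by (apply fco_radius; auto; lra).
  assert (HQ : 0 < PSeries (dco x l) y * PSeries (fco x (l + 1)) y - PSeries (dco x (l + 1)) y * PSeries (fco x l) y).
  { rewrite <- !PSeries_mult by (apply rad_ok; auto).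
    rewrite <- PSeries_minus by (apply ex_pseries_mult; apply rad_ok; auto).
    rewrite (PSeries_ext _ (Qc x l)) by (intros n; reflexivity).
    eapply Rlt_le_trans; [|apply (PSeries_ge _ y 1)].
    - simpl. pose proof (Qc_nonneg x l 0 Hx Hl). pose proof (Qc_1 x l Hx Hl).
      assert (0 < Qc x l 1 * (y * 1)) by (apply Rmult_lt_0_compat; lra). lra.
    - apply (ex_pseries_ext (PS_minus (PS_mult (dco x l) (fco x (l + 1))) (PS_mult (dco x (l + 1)) (fco x l)))).
      intros n; reflexivity.
      apply ex_pseries_minus; apply ex_pseries_mult; apply rad_ok; auto.
    - lra.
    - intros n; apply Qc_nonneg; auto. }
  set (E := exp (- x - y)). assert (0 < E) by apply exp_pos.
  pose proof (Rpower_pos y l). pose proof (Rpower_pos y (l + 1)).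
  set (D0 := PSeries (dco x l) y) in *. set (D1 := PSeries (dco x (l + 1)) y) in *.
  set (F0 := PSeries (fco x l) y) in *. set (F1 := PSeries (fco x (l + 1)) y) in *.
  set (K := E * E * Rpower y l * Rpower y (l + 1)).
  assert (0 < K) by (unfold K; repeat apply Rmult_lt_0_compat; auto).
  replace (E * Rpower y (l + 1) * D1 * (E * Rpower y l * F0)) with (K * (D1 * F0)) by (unfold K; ring).
  replace (E * Rpower y l * D0 * (E * Rpower y (l + 1) * F1)) with (K * (D0 * F1)) by (unfold K; ring).
  apply Rmult_lt_compat_l; auto. lra.
Qed.

Lemma Sf_sum x l y n : 0 < x -> 0 < y -> 0 < l ->
  Sf x l y = sum_f_R0 (fun k => Fmu (l + INR k) x y) n + Sf x (l + INR n + 1) y.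
Proof.
  intros Hx Hy Hl. induction n as [|n IH].
  - simpl. replace (l + 0) with l by ring. apply Sf_step; auto.
  - rewrite IH. rewrite tech5. rewrite (Sf_step x (l + INR n + 1) y) by (auto; pose proof (pos_INR n); lra).
    rewrite S_INR. replace (l + (INR n + 1)) with (l + INR n + 1) by ring.
    replace (l + INR n + 1 + 1) with (l + (INR n + 1) + 1) by ring. ring.
Qed.

Lemma chain x nu y q : 0 < x -> 0 < y -> 0 < nu ->
  Sf x (nu + INR q + 1) y / Fmu (nu + INR q + 1) x y < Sf x nu y / Fmu nu x y.
Proof.
  intros Hx Hy Hnu.
  assert (Hs : forall l, 0 < l -> Sf x (l + 1) y / Fmu (l + 1) x y < Sf x l y / Fmu l x y).
  { intros l Hl. pose proof (step_ineq x l y Hx Hy Hl).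
    pose proof (Fmu_pos l x y Hx Hy ltac:(lra)). pose proof (Fmu_pos (l + 1) x y Hx Hy ltac:(lra)).
    apply (Rmult_lt_reg_r (Fmu l x y * Fmu (l + 1) x y)). apply Rmult_lt_0_compat; auto.
    replace (Sf x (l + 1) y / Fmu (l + 1) x y * (Fmu l x y * Fmu (l + 1) x y)) with (Sf x (l + 1) y * Fmu l x y) by (field; lra).
    replace (Sf x l y / Fmu l x y * (Fmu l x y * Fmu (l + 1) x y)) with (Sf x l y * Fmu (l + 1) x y) by (field; lra).
    auto. }
  induction q as [|q IH].
  - simpl. replace (nu + 0 + 1) with (nu + 1) by ring. apply Hs; auto.
  - rewrite S_INR. replace (nu + (INR q + 1) + 1) with ((nu + INR q + 1) + 1) by ring.
    pose proof (pos_INR q). pose proof (Hs (nu + INR q + 1) ltac:(lra)). lra.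
Qed.

Theorem proposition4 (mu x y : R) (n q : nat) :
  0 < mu -> 0 < x -> 0 < y ->
  sum_f_R0 (fun k => Fmu (mu + INR k) x y) n < Pmu mu x y /\
  (Fmu (mu + INR n + 1) x y > Fmu (mu + INR n + INR q + 2) x y ->
   Pmu mu x y < sum_f_R0 (fun k => Fmu (mu + INR k) x y) n + Uq q (mu + INR n + 1) x y).
Proof.
  intros Hmu Hx Hy. rewrite Pmu_eq by auto. rewrite (Sf_sum x mu y n) by auto.
  pose proof (pos_INR n) as Hn. pose proof (pos_INR q) as Hq.
  split.
  - pose proof (Sf_pos (mu + INR n + 1) x y Hx Hy ltac:(lra)). lra.
  - intros Hgt. apply Rplus_lt_compat_l.
    set (nu := mu + INR n + 1) in *. assert (Hnu : 0 < nu) by (unfold nu; lra).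
    replace (mu + INR n + INR q + 2) with (nu + INR q + 1) in Hgt by (unfold nu; ring).
    unfold Uq.
    set (A := sum_f_R0 (fun k => Fmu (nu + INR k) x y) q).
    set (Fn := Fmu nu x y) in *. set (Fp := Fmu (nu + INR q + 1) x y) in *.
    assert (HS : Sf x nu y = A + Sf x (nu + INR q + 1) y) by (apply Sf_sum; auto).
    set (Sp := Sf x (nu + INR q + 1) y) in *.
    pose proof (chain x nu y q Hx Hy Hnu) as Hc. fold Fn Fp Sp in Hc.
    assert (HFn : 0 < Fn) by (apply Fmu_pos; auto; lra).
    assert (HFp : 0 < Fp) by (apply Fmu_pos; auto; lra).
    assert (HSp : 0 < Sp) by (apply Sf_pos; auto; lra).
    assert (Hc2 : Sp * Fn < Sf x nu y * Fp).
    { apply (Rmult_lt_compat_r (Fn * Fp)) in Hc; [|apply Rmult_lt_0_compat; auto].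
      replace (Sp / Fp * (Fn * Fp)) with (Sp * Fn) in Hc by (field; lra).
      replace (Sf x nu y / Fn * (Fn * Fp)) with (Sf x nu y * Fp) in Hc by (field; lra). exact Hc. }
    rewrite HS in *. assert (HD : 0 < Fn - Fp) by lra.
    apply (Rmult_lt_reg_r (Fn - Fp)); auto.
    replace (A / (Fn - Fp) * Fn * (Fn - Fp)) with (A * Fn) by (field; lra).
    nra.
Qed.
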